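(* Let $G=(V,E)$ be a graph with $m\ge 1$ edges. Every biased orientation of $G$ has in-degree distribution $p^\flat$ satisfying $H(p^\flat) \le \mathrm{OPT}(G) + 1$.
   Context: All graphs are finite, undirected and loopless, but multiple edges are allowed. For an orientation $\vec G$ of $G$, the in-degree distribution is $p_v := \rho_{\vec G}(v)/m$, where $\rho_{\vec G}(v)$ is the in-degree of $v$ and $m=|E|$. Entropy: $H(p) := \sum_{v\in V} -p_v\log p_v$, $\log$ base $2$, $-0\log 0:=0$. $\mathrm{OPT}(G)$ denotes the minimum of $H(p)$ over in-degree distributions $p$ of orientations of $G$. An orientation of $G$ is biased if each edge $vw$ with $\deg(v)>\deg(w)$ is oriented toward $v$ (edges between vertices of equal degree may be oriented arbitrarily). *)

(* Defs.v *)
From Stdlib Require Import Reals List Arith Bool.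
Import ListNotations.
Open Scope R_scope.

(* A (multi)graph on vertex set {0,...,n-1} is given by a list E of edges
   (u,v); repeated entries are parallel edges. Loopless: u <> v. *)
Definition edge := (nat * nat)%type.

Definition valid_graph (n : nat) (E : list edge) : Prop :=
  forall e, In e E -> (fst e < n)%nat /\ (snd e < n)%nat /\ fst e <> snd e.

Definition deg (E : list edge) (v : nat) : nat :=
  length (filter (fun e : edge => Nat.eqb (fst e) v || Nat.eqb (snd e) v) E).

(* An orientation is a list of booleans, one per edge (same length as E):
   edge (u,v) with bit b points toward (head) v if b = true, toward u otherwise. *)
Definition head (e : edge) (b : bool) : nat := if b then snd e else fst e.

Definition is_orientation (E : list edge) (o : list bool) : Prop :=
  length o = length E.

Definition indeg (E : list edge) (o : list bool) (v : nat) : nat :=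
  length (filter (fun eb : edge * bool => Nat.eqb (head (fst eb) (snd eb)) v)
                 (combine E o)).

Definition p_dist (E : list edge) (o : list bool) (v : nat) : R :=
  INR (indeg E o v) / INR (length E).

Definition log2 (x : R) : R := ln x / ln 2.

Definition ent_term (x : R) : R :=
  if Req_EM_T x 0 then 0 else - x * log2 x.

Definition entropy (n : nat) (E : list edge) (o : list bool) : R :=
  fold_right Rplus 0 (map (fun v => ent_term (p_dist E o v)) (seq 0 n)).

Fixpoint bool_lists (k : nat) : list (list bool) :=
  match k with
  | O => [[]]
  | S k' => flat_map (fun l => [true :: l; false :: l]) (bool_lists k')
  end.

Definition OPT (n : nat) (E : list edge) : R :=
  match map (entropy n E) (bool_lists (length E)) with
  | [] => 0
  | x :: l => fold_right Rmin x l
  end.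

Definition biased (E : list edge) (o : list bool) : Prop :=
  is_orientation E o /\
  forall e b, In (e, b) (combine E o) ->
    ((deg E (snd e) < deg E (fst e))%nat -> head e b = fst e) /\
    ((deg E (fst e) < deg E (snd e))%nat -> head e b = snd e).

(* Main.v *)
Require Import Defs.
From Stdlib Require Import Reals List Arith.
From Stdlib Require Import Lia Lra.
Import ListNotations.
Open Scope R_scope.
Local Open Scope bool_scope.
Local Open Scope R_scope.

Definition rsum (l : list R) : R := fold_right Rplus 0 l.

Lemma rsum_map_plus {A} (f g : A -> R) l :
  rsum (map (fun x => f x + g x) l) = rsum (map f l) + rsum (map g l).
Proof. induction l as [|a l IH]; unfold rsum in *; simpl; [lra|]. rewrite IH. lra. Qed.

Lemma rsum_map_minus {A} (f g : A -> R) l :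
  rsum (map (fun x => f x - g x) l) = rsum (map f l) - rsum (map g l).
Proof. induction l as [|a l IH]; unfold rsum in *; simpl; [lra|]. rewrite IH. lra. Qed.

Lemma rsum_map_scal {A} (c : R) (f : A -> R) l :
  rsum (map (fun x => c * f x) l) = c * rsum (map f l).
Proof. induction l as [|a l IH]; unfold rsum in *; simpl; [lra|]. rewrite IH. lra. Qed.

Lemma rsum_map_const {A} (c : R) (l : list A) :
  rsum (map (fun _ => c) l) = INR (length l) * c.
Proof. induction l as [|a l IH]; unfold rsum in *; simpl length; [simpl; lra|].
  rewrite S_INR. simpl. rewrite IH. lra. Qed.

Lemma rsum_map_le {A} (f g : A -> R) l :
  (forall x, In x l -> f x <= g x) -> rsum (map f l) <= rsum (map g l).
Proof. induction l as [|a l IH]; intros H; unfold rsum in *; simpl; [lra|].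
  apply Rplus_le_compat; [apply H; simpl; auto| apply IH; intros; apply H; simpl; auto]. Qed.

Lemma rsum_ext {A} (f g : A -> R) l :
  (forall x, In x l -> f x = g x) -> rsum (map f l) = rsum (map g l).
Proof. intros H. f_equal. apply map_ext_in. exact H. Qed.

Lemma sum_ind (h : nat) (f : nat -> R) k : forall a,
  rsum (map (fun v => INR (if Nat.eqb h v then 1 else 0) * f v) (seq a k))
  = if andb (Nat.leb a h) (Nat.ltb h (a+k)) then f h else 0.
Proof.
  induction k as [|k IH]; intros a.
  - unfold rsum; simpl. destruct (Nat.leb_spec a h), (Nat.ltb_spec h (a+0)); simpl; try lia; lra.
  - change (seq a (S k)) with (a :: seq (S a) k). unfold rsum in *. simpl map. simpl fold_right.
    rewrite IH.
    destruct (Nat.eqb_spec h a);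
    destruct (Nat.leb_spec a h), (Nat.ltb_spec h (a + S k)),
      (Nat.leb_spec (S a) h), (Nat.ltb_spec h (S a + k)); simpl; try lia; subst; lra.
Qed.

Definition hdv (x : edge * bool) : nat := Defs.head (fst x) (snd x).
Definition cnt (L : list (edge*bool)) (v : nat) : nat :=
  length (filter (fun eb : edge*bool => Nat.eqb (Defs.head (fst eb) (snd eb)) v) L).

Lemma cnt_cons x L v : cnt (x::L) v = ((if Nat.eqb (hdv x) v then 1 else 0) + cnt L v)%nat.
Proof. unfold cnt, hdv; simpl. destruct (Nat.eqb _ v); reflexivity. Qed.

Lemma sum_vertices (f : nat -> R) n L : (forall x, In x L -> (hdv x < n)%nat) ->
  rsum (map (fun v => INR (cnt L v) * f v) (seq 0 n)) = rsum (map (fun x => f (hdv x)) L).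
Proof.
  induction L as [|a L IH]; intros H.
  - transitivity (rsum (map (fun _ => 0) (seq 0 n))).
    + apply rsum_ext; intros. unfold cnt; simpl; ring.
    + rewrite rsum_map_const. unfold rsum; simpl; ring.
  - rewrite (rsum_ext _ (fun v => INR (if Nat.eqb (hdv a) v then 1 else 0) * f v
                                  + INR (cnt L v) * f v)).
    2: { intros v _. rewrite cnt_cons, plus_INR. ring. }
    rewrite rsum_map_plus, sum_ind, IH.
    2: { intros; apply H; simpl; auto. }
    assert (Ha : (hdv a < n)%nat) by (apply H; simpl; auto).
    destruct (Nat.leb_spec 0 (hdv a)), (Nat.ltb_spec (hdv a) (0 + n)); try lia.
    unfold rsum; simpl. ring.
Qed.

Lemma ln_le' x y : 0 < x -> x <= y -> ln x <= ln y.
Proof. intros Hx Hxy. destruct (Rle_lt_or_eq_dec _ _ Hxy) as [H|H].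
  - left; apply ln_increasing; auto.
  - subst; lra. Qed.

Lemma ln2_pos : 0 < ln 2.
Proof. rewrite <- ln_1. apply ln_increasing; lra. Qed.

Lemma ln_le_pred x : 0 < x -> ln x <= x - 1.
Proof. intros Hx. rewrite <- (ln_exp (x - 1)). apply ln_le'; auto.
  pose proof (exp_ineq1_le (x - 1)). lra. Qed.

Lemma entropy_edge n E o : valid_graph n E -> (1 <= length E)%nat ->
  entropy n E o = / (INR (length E) * ln 2) *
    rsum (map (fun x => ln (INR (length E)) - ln (INR (cnt (combine E o) (hdv x)))) (combine E o)).
Proof.
  intros Hv Hm.
  assert (Hmp : 0 < INR (length E)) by (apply lt_0_INR; lia).
  pose proof ln2_pos as Hl2.
  unfold entropy. change (fold_right Rplus 0) with rsum.
  rewrite (rsum_ext _ (fun v => INR (cnt (combine E o) v) *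
      (/ (INR (length E) * ln 2) * (ln (INR (length E)) - ln (INR (cnt (combine E o) v)))))).
  2: { intros v _. unfold p_dist. change (indeg E o v) with (cnt (combine E o) v).
       destruct (cnt (combine E o) v) as [|k] eqn:Hk.
       - unfold ent_term. simpl INR. rewrite Rdiv_0_l.
         destruct (Req_EM_T 0 0); [ring| congruence].
       - assert (Hk' : 0 < INR (S k)) by (apply lt_0_INR; lia).
         unfold ent_term. destruct (Req_EM_T _ 0) as [e|e].
         + exfalso. unfold Rdiv in e. apply Rmult_integral in e.
           destruct e as [e|e]; [lra|]. apply Rinv_neq_0_compat in e; auto; lra.
         + unfold log2, Rdiv. rewrite ln_mult, ln_Rinv; auto.
           2: { apply Rinv_0_lt_compat; auto. }
           field. split; lra. }
  rewrite sum_vertices.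
  - apply rsum_map_scal.
  - intros [e b] Hin. apply in_combine_l in Hin. apply Hv in Hin.
    unfold hdv, Defs.head; simpl; destruct b; lia.
Qed.

Lemma deg_cons e E v : deg (e::E) v =
  ((if (Nat.eqb (fst e) v) || (Nat.eqb (snd e) v) then 1 else 0) + deg E v)%nat.
Proof. unfold deg; simpl. destruct (_ || _); reflexivity. Qed.

Lemma deg_sum n E : rsum (map (fun v => INR (deg E v)) (seq 0 n)) <= 2 * INR (length E).
Proof.
  induction E as [|e E IH].
  - transitivity (rsum (map (fun _ => 0) (seq 0 n))).
    + right. apply rsum_ext; intros. reflexivity.
    + rewrite rsum_map_const. simpl. lra.
  - rewrite (rsum_ext _ (fun v => INR (if (Nat.eqb (fst e) v) || (Nat.eqb (snd e) v) then 1 else 0)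
                                  + INR (deg E v))).
    2: { intros v _. rewrite deg_cons, plus_INR. ring. }
    rewrite rsum_map_plus.
    assert (rsum (map (fun v => INR (if (Nat.eqb (fst e) v) || (Nat.eqb (snd e) v) then 1 else 0)) (seq 0 n)) <= 2).
    { eapply Rle_trans.
      - apply (rsum_map_le _ (fun v => INR (if Nat.eqb (fst e) v then 1 else 0) * (fun _ => 1) v
                + INR (if Nat.eqb (snd e) v then 1 else 0) * (fun _ => 1) v)).
        intros v _. destruct (Nat.eqb (fst e) v), (Nat.eqb (snd e) v); simpl; lra.
      - rewrite rsum_map_plus, !sum_ind.
        destruct (_ && _), (_ && _); lra. }
    simpl length. rewrite S_INR. lra.
Qed.

Lemma cnt_le_deg E o v : (cnt (combine E o) v <= deg E v)%nat.
Proof.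
  revert o. induction E as [|a E IH]; intros o; destruct o as [|b o].
  - unfold cnt; simpl; lia.
  - unfold cnt; simpl; lia.
  - unfold cnt; simpl; lia.
  - change (combine (a::E) (b::o)) with ((a,b) :: combine E o).
    rewrite cnt_cons, deg_cons. specialize (IH o).
    destruct (Nat.eqb (hdv (a,b)) v) eqn:H.
    + apply Nat.eqb_eq in H. unfold hdv, Defs.head in H; simpl in H.
      destruct b; subst; rewrite Nat.eqb_refl, ?Bool.orb_true_r; simpl; lia.
    + destruct (_ || _); lia.
Qed.

Lemma cnt_pos x L : In x L -> (1 <= cnt L (hdv x))%nat.
Proof.
  intros H. unfold cnt.
  assert (Hf : In x (filter (fun eb : edge*bool => Nat.eqb (Defs.head (fst eb) (snd eb)) (hdv x)) L)).
  { apply filter_In; split; auto. apply Nat.eqb_refl. }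
  destruct (filter _ L); [contradiction| simpl; lia].
Qed.

Definition Mx (E : list edge) (e : edge) : nat := Nat.max (deg E (fst e)) (deg E (snd e)).

Lemma deg_head_le E e b : (deg E (Defs.head e b) <= Mx E e)%nat.
Proof. unfold Mx; destruct b; simpl; lia. Qed.

Lemma biased_head E o e b : biased E o -> In (e,b) (combine E o) -> deg E (Defs.head e b) = Mx E e.
Proof.
  intros [_ Hb] Hin. destruct (Hb e b Hin) as [H1 H2]. unfold Mx.
  destruct (lt_eq_lt_dec (deg E (fst e)) (deg E (snd e))) as [[Hl|Hl]|Hl].
  - rewrite H2; auto. lia.
  - destruct b; simpl; lia.
  - rewrite H1; auto. lia.
Qed.

Lemma combine_fst (g : edge -> R) E o : length o = length E ->
  rsum (map (fun x : edge * bool => g (fst x)) (combine E o)) = rsum (map g E).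
Proof.
  revert o; induction E as [|a E IH]; intros o Hl; destruct o as [|b o]; simpl in *; try discriminate.
  - reflexivity.
  - unfold rsum in *; simpl. rewrite IH; auto.
Qed.

Lemma fold_Rmin_in x l : In (fold_right Rmin x l) (x :: l).
Proof.
  induction l as [|a l IH]; simpl; auto.
  set (y := fold_right Rmin x l) in *.
  assert (H : Rmin a y = a \/ Rmin a y = y).
  { unfold Rmin. destruct (Rle_dec a y); auto. }
  destruct H as [H|H]; rewrite H; [auto|]. destruct IH as [IH|IH]; auto.
Qed.

Lemma bool_lists_len k l : In l (bool_lists k) -> length l = k.
Proof.
  revert l; induction k as [|k IH]; intros l H; simpl in H.
  - destruct H as [H|[]]; subst; reflexivity.
  - apply in_flat_map in H. destruct H as [l' [H1 H2]].
    simpl in H2. destruct H2 as [H2|[H2|[]]]; subst; simpl; f_equal; auto.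
Qed.

Lemma bool_lists_in k : In (repeat false k) (bool_lists k).
Proof.
  induction k as [|k IH]; simpl; auto.
  apply in_flat_map. exists (repeat false k). split; simpl; auto.
Qed.

Lemma OPT_witness n E : exists o', length o' = length E /\ OPT n E = entropy n E o'.
Proof.
  unfold OPT.
  pose proof (bool_lists_in (length E)) as Hin.
  destruct (map (entropy n E) (bool_lists (length E))) as [|x l] eqn:Hm.
  - apply (in_map (entropy n E)) in Hin. rewrite Hm in Hin. destruct Hin.
  - pose proof (fold_Rmin_in x l) as H. rewrite <- Hm in H.
    apply in_map_iff in H. destruct H as [o' [H1 H2]].
    exists o'. split; [apply bool_lists_len; auto| auto].
Qed.

Theorem theorem2 (n : nat) (E : list edge) (o : list bool) :
  valid_graph n E ->
  (1 <= length E)%nat ->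
  biased E o ->
  entropy n E o <= OPT n E + 1.
Proof.
  intros Hv Hm Hb.
  destruct (OPT_witness n E) as [o' [Hl' Hopt]]. rewrite Hopt.
  assert (Hl : length o = length E) by (destruct Hb as [Hb _]; exact Hb).
  rewrite !entropy_edge by auto.
  set (m := INR (length E)).
  assert (Hmp : 0 < m) by (apply lt_0_INR; lia).
  pose proof ln2_pos as Hl2.
  set (C := combine E o). set (C' := combine E o').
  rewrite !rsum_map_minus.
  assert (Hc : forall oo, length oo = length E ->
     rsum (map (fun _ : edge * bool => ln m) (combine E oo)) = m * ln m).
  { intros oo Hoo. rewrite (combine_fst (fun _ => ln m)) by auto.
    rewrite rsum_map_const. reflexivity. }
  unfold C, C'. rewrite !Hc by auto. fold C C'.
  assert (HB : rsum (map (fun x => ln (INR (cnt C' (hdv x)))) C')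
               <= rsum (map (fun e => ln (INR (Mx E e))) E)).
  { rewrite <- (combine_fst (fun e => ln (INR (Mx E e))) E o') by auto.
    apply rsum_map_le. intros [e b] Hin. unfold C' in *.
    pose proof (cnt_pos _ _ Hin) as H1.
    pose proof (cnt_le_deg E o' (hdv (e,b))) as H2.
    pose proof (deg_head_le E e b) as H3.
    apply ln_le'. apply lt_0_INR; lia. apply le_INR. unfold hdv in *; simpl in *. lia. }
  assert (HA : rsum (map (fun e => ln (INR (Mx E e))) E) - m * ln 2
               - rsum (map (fun x => ln (INR (cnt C (hdv x)))) C) <= 0).
  { rewrite <- (combine_fst (fun e => ln (INR (Mx E e))) E o) by auto.
    assert (H2 : rsum (map (fun _ : edge*bool => ln 2) C) = m * ln 2).
    { unfold C. rewrite (combine_fst (fun _ => ln 2)) by auto. apply rsum_map_const. }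
    assert (H1 : rsum (map (fun _ : edge*bool => 1) C) = m).
    { unfold C. rewrite (combine_fst (fun _ => 1)) by auto. rewrite rsum_map_const. unfold m; ring. }
    rewrite <- H2, <- !rsum_map_minus.
    set (f := fun v => INR (deg E v) / (2 * INR (cnt C v))).
    eapply Rle_trans.
    { apply (rsum_map_le _ (fun x => f (hdv x) - 1)).
      intros [e b] Hin. simpl fst. unfold f. unfold C in *.
      pose proof (cnt_pos _ _ Hin) as Hp.
      pose proof (cnt_le_deg E o (hdv (e,b))) as Hd.
      rewrite <- (biased_head E o e b) by auto.
      assert (0 < INR (cnt (combine E o) (hdv (e,b)))) by (apply lt_0_INR; lia).
      assert (0 < INR (deg E (Defs.head e b))).
      { apply lt_0_INR. unfold hdv in *; simpl in *; lia. }
      change (hdv (e,b)) with (Defs.head e b) in *.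
      set (r := INR (cnt (combine E o) (Defs.head e b))) in *. set (d := INR (deg E (Defs.head e b))) in *.
      replace (ln d - ln 2 - ln r) with (ln (d / (2 * r))).
      - apply ln_le_pred. apply Rdiv_lt_0_compat; lra.
      - unfold Rdiv. rewrite ln_mult, ln_Rinv, ln_mult; try ring.
        all: repeat (first [apply Rinv_0_lt_compat | apply Rmult_lt_0_compat]); lra. }
    rewrite rsum_map_minus, H1.
    rewrite <- (sum_vertices f n C).
    2: { intros [e b] Hin. unfold C in Hin. apply in_combine_l in Hin. apply Hv in Hin.
         unfold hdv, Defs.head; simpl; destruct b; lia. }
    pose proof (deg_sum n E) as Hds.
    assert (rsum (map (fun v => INR (cnt C v) * f v) (seq 0 n))
            <= rsum (map (fun v => / 2 * INR (deg E v)) (seq 0 n))).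
    { apply rsum_map_le. intros v _. unfold f.
      destruct (cnt C v) as [|k] eqn:Hk.
      - simpl INR. pose proof (pos_INR (deg E v)). lra.
      - assert (0 < INR (S k)) by (apply lt_0_INR; lia).
        right. field. lra. }
    rewrite rsum_map_scal in H. fold m in Hds. lra. }
  assert (Hfin : / (m * ln 2) * (m * ln 2) = 1) by (field; lra).
  assert (Hc0 : 0 < / (m * ln 2)) by (apply Rinv_0_lt_compat, Rmult_lt_0_compat; lra).
  set (a := rsum (map (fun x => ln (INR (cnt C (hdv x)))) C)) in *.
  set (a' := rsum (map (fun x => ln (INR (cnt C' (hdv x)))) C')) in *.
  assert (a' - a <= m * ln 2) by lra.
  apply (Rmult_le_compat_l (/ (m * ln 2))) in H; [|lra].
  nra.
Qed.
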